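(* Let $n\ge3$, $2\le i\le n-1$, $\mathfrak g=\mathfrak{sp}(n,\mathbb C)$ and $\mathfrak q=\mathfrak l\oplus\mathfrak n$ the maximal parabolic subalgebra of type $C_n(i)$. Let $V(\mu+\epsilon_\gamma)$ be the irreducible $\mathfrak l$-submodule of $\mathfrak l_\gamma\otimes\mathfrak z(\mathfrak n)$ with highest weight $\varepsilon_1+\varepsilon_2$. Then the $\mathfrak l$-intertwining operator $\tilde\tau_2|_{V(\mu+\epsilon_\gamma)^*}:V(\mu+\epsilon_\gamma)^*\to\mathcal P^2(\mathfrak g(1))$ is not identically zero.
   Context: $\mathfrak g=\mathfrak{sp}(n,\mathbb C)$ (rank $n$) with Cartan $\mathfrak h$, roots $\pm\varepsilon_j\pm\varepsilon_k$ ($j<k$), $\pm2\varepsilon_j$, simple roots $\alpha_j=\varepsilon_j-\varepsilon_{j+1}$ ($j<n$), $\alpha_n=2\varepsilon_n$, Killing form $\kappa$, root vectors $X_\alpha$. $\mathfrak q=\mathfrak l\oplus\mathfrak n$ is the standard maximal parabolic subalgebra determined by $\alpha_i$ ($\mathfrak l$ = $\mathfrak h$ plus root spaces of roots in the span of $\Pi\setminus\{\alpha_i\}$); grading $\mathfrak g=\bigoplus_{j=-2}^2\mathfrak g(j)$ by the $\alpha_i$-coefficient, $\mathfrak l=\mathfrak g(0)$, $\Delta(\mathfrak g(1))=\{\varepsilon_j\pm\varepsilon_k:1\le j\le i<k\le n\}$, $\mathfrak z(\mathfrak n)=\mathfrak g(2)$ with roots $\varepsilon_j+\varepsilon_k$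 ($j<k\le i$), $2\varepsilon_j$ ($j\le i$), $\mathfrak z(\bar{\mathfrak n})=\mathfrak g(-2)$. $\mathfrak l_\gamma\cong\mathfrak{sl}(i,\mathbb C)$ is the simple ideal of $[\mathfrak l,\mathfrak l]$ with simple roots $\alpha_1,\dots,\alpha_{i-1}$. (Here $\mu=\varepsilon_1+\varepsilon_{i+1}$ is the highest weight of $\mathfrak g(1)$ and $\epsilon_\gamma=\varepsilon_2-\varepsilon_{i+1}$.) $\omega=\sum_{\gamma\in\Delta(\mathfrak z(\mathfrak n))}X^*_\gamma\otimes X_\gamma$ with $X^*_\gamma\in\mathfrak g_{-\gamma}$, $\kappa(X^*_\gamma,X_{\gamma'})=\delta_{\gamma\gamma'}$; $\tau_2(X)=\tfrac12(\mathrm{ad}(X)^2\otimes\mathrm{Id})\omega\in\mathfrak l\otimes\mathfrak z(\mathfrak n)$ for $X\in\mathfrak g(1)$. For an irreducible $\mathfrak l$-constituent $W$ of $\mathfrak l\otimes\mathfrak z(\mathfrak n)$, $W^*$ is realized in $\mathfrak l\otimes\mathfrak z(\bar{\mathfrak n})$ via $(A\otimes B)(C\otimes D)=\kappa(A,C)\kappa(B,D)$, and $\tilde\tau_2|_{W^*}(Y^* )(X)=Y^*(\tau_2(X))$, a homogeneous quadratic polynomial on $\mathfrak g(1)$. *)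

(* Defs.v *)
From HB Require Import structures.
From mathcomp Require Import all_boot all_order all_algebra all_field.
From mathcomp Require Import mxtens.

Unset Strict Implicit.
Unset Printing Implicit Defensive.
Import Order.TTheory GRing.Theory Num.Theory.
Local Open Scope ring_scope.

(* Matrices are (n+n) x (n+n); rows/columns 0..n-1 and n..2n-1.
   Indices j of eps_j are 0-based here: eps_{j+1} of the paper = index j. *)
Notation Mat n := 'M[algC]_(n + n).

Definition Emx (n a b : nat) : Mat n :=
  \matrix_(x, y) ((x == a :> nat) && (y == b :> nat))%:R.

Definition Jmx n : Mat n := \sum_(0 <= j < n) (Emx n j (n + j) - Emx n (n + j) j).
Definition is_sp n (X : Mat n) : bool := X^T *m Jmx n + Jmx n *m X == 0.

Definition bracket n (X Y : Mat n) : Mat n := X *m Y - Y *m X.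

Definition killing n (X Y : Mat n) : algC := (2 * n + 2)%:R * \tr (X *m Y).

(* Cartan subalgebra: H = diag(h_0..h_{n-1}, -h_0..-h_{n-1}); eps_j(H) = h j *)
Definition Hdiag n (h : nat -> algC) : Mat n :=
  \sum_(0 <= j < n) h j *: (Emx n j j - Emx n (n + j) (n + j)).

(* grading element for alpha_i (paper's i, 1-based): eps_j(H0) = 1 for j <= i
   (0-based j < i), 0 otherwise; g(k) = k-eigenspace of ad H0 in sp(n). *)
Definition H0 n i : Mat n := Hdiag n (fun j => if (j < i)%N then 1 else 0).
Definition gdeg n i (k : int) (X : Mat n) : bool :=
  is_sp n X && (bracket n (H0 n i) X == k%:~R *: X).

Definition lev n i := gdeg n i 0.
Definition g1 n i := gdeg n i 1.
Definition zbar n i := gdeg n i (-2).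

(* l_gamma = sl(i) : matrices [[A,0],[0,-A^T]] with A supported on the upper
   left i x i block and tr A = 0 (span of root vectors for eps_j - eps_k,
   j,k < i, and their brackets). *)
Definition lgamma n i (X : Mat n) : bool :=
  [&& is_sp n X,
      [forall a : 'I_(n + n), forall b : 'I_(n + n),
         (X a b != 0) ==> (((a < i) && (b < i))%N ||
                            ((n <= a < n + i) && (n <= b < n + i))%N)]
    & \sum_(a < n + n | (a < i)%N) X a a == 0].

(* negative root vectors: the span n^- of the root spaces of the negative
   roots -(eps_j - eps_k) (j<k), -(eps_j+eps_k), -2 eps_j is, in this
   realization, { [[A,0],[C,-A^T]] in sp(n) : A strictly lower triangular }.
   The negative root vectors of l are those in l /\ n^-. *)
Definition neg_part n (X : Mat n) : bool :=
  is_sp n X &&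
  [forall a : 'I_(n + n), forall b : 'I_(n + n),
     (((a < n) && (b < n) && (a <= b)) || ((a < n) && (n <= b)))%N ==> (X a b == 0)].

(* root vectors for gamma in Delta(z(n)): eps_j + eps_k (j < k < i) and
   2 eps_j (j < i);  Xm gives a root vector of -gamma. *)
Definition Xp n (j k : nat) : Mat n :=
  if j == k then Emx n j (n + j) else Emx n j (n + k) + Emx n k (n + j).
Definition Xm n (j k : nat) : Mat n :=
  if j == k then Emx n (n + j) j else Emx n (n + j) k + Emx n (n + k) j.
Definition Xstar n (j k : nat) : Mat n := (killing n (Xm n j k) (Xp n j k))^-1 *: Xm n j k.

(* Tensors: g (x) g is identified with 'M_((n+n)*(n+n)) via the Kronecker
   product A (x) B |-> tensmx A B (a linear isomorphism). *)
Notation Tens n := 'M[algC]_((n + n) * (n + n)).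

Definition tens n (A B : Mat n) : Tens n := tensmx A B.

Definition tau2 n i (X : Mat n) : Tens n :=
  2^-1 *: \sum_(0 <= k < i) \sum_(0 <= j < k.+1)
     tens n (bracket n X (bracket n X (Xstar n j k))) (Xp n j k).

(* the pairing (A(x)B)(C(x)D) = kappa(A,C) kappa(B,D), i.e.
   (2n+2)^2 tr(T S) in the Kronecker model *)
Definition tpair n (T S : Tens n) : algC := ((2 * n + 2)%:R ^+ 2) * \tr (T *m S).

(* action of Z in l on g (x) g : ad Z (x) 1 + 1 (x) ad Z *)
Definition tact n (Z : Mat n) (T : Tens n) : Tens n :=
  let D := tens n Z 1%:M + tens n 1%:M Z in D *m T - T *m D.

Definition in_lg_zbar n i (T : Tens n) : Prop :=
  exists s : seq (Mat n * Mat n),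
    all (fun p => lgamma n i p.1 && zbar n i p.2) s /\
    T = \sum_(p <- s) tens n p.1 p.2.

(* lowest weight vectors of weight -(eps_1 + eps_2) (0-based: h 0 + h 1) *)
Definition lowest_wt_vec n i (T : Tens n) : Prop :=
  [/\ in_lg_zbar n i T,
      forall h : nat -> algC, tact n (Hdiag n h) T = - (h 0%N + h 1%N) *: T
    & forall Z, lev n i Z -> neg_part n Z -> tact n Z T = 0].

(* V(mu + eps_gamma)^* realized in l (x) z(nbar): the l-submodule generated by
   the lowest weight vectors of weight -(eps_1+eps_2) in l_gamma (x) z(nbar) *)
Definition Wdual n i (Y : Tens n) : Prop :=
  forall U : {vspace Tens n},
    (forall T, lowest_wt_vec n i T -> T \in U) ->
    (forall Z T, lev n i Z -> T \in U -> tact n Z T \in U) ->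
    Y \in U.

(* Main.v *)
Require Import Defs.
From HB Require Import structures.
From mathcomp Require Import all_boot all_order all_algebra all_field.
From mathcomp Require Import mxtens.
From mathcomp Require Import zify ring lra.
Import GRing.Theory Num.Theory.
Local Open Scope ring_scope.

Section Basic.
Variable n : nat.
Implicit Types (a b c d : nat).

Lemma EmxE a b (r s : 'I_(n+n)) : Emx n a b r s = ((r == a :> nat) && (s == b :> nat))%:R.
Proof. by rewrite mxE. Qed.

Lemma mulEE a b c d :
  Emx n a b *m Emx n c d = ((b == c) && (b < n + n)%N)%:R *: Emx n a d.
Proof.
apply/matrixP => r s; rewrite !mxE.
case: (ltnP b (n+n)) => hb.
- rewrite (bigD1 (Ordinal hb)) //= big1 ?addr0; last first.
    move=> k hk; rewrite !mxE; case: (k == b :> nat) / eqP; last by rewrite andbF mul0r.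
    by move=> e; exfalso; move/eqP: hk; apply; apply: val_inj.
  rewrite !mxE /= eqxx andbT.
  by case: (b == c); case: (r == a :> nat); case: (s == d :> nat); rewrite /= ?mulr1 ?mulr0 ?mul0r ?mul1r.

- rewrite big1 ?andbF ?mul0r // => k _; rewrite !mxE.
  have : (k == b :> nat) = false by apply/eqP => e; move: (ltn_ord k); rewrite e; lia.
  by move=> ->; rewrite andbF mul0r.
Qed.

Lemma trE a b : \tr (Emx n a b) = ((a == b) && (a < n + n)%N)%:R.
Proof.
rewrite /mxtrace; case: (ltnP a (n+n)) => ha.
- rewrite (bigD1 (Ordinal ha)) //= big1 ?addr0; last first.
    move=> k hk; rewrite !mxE; case: (k == a :> nat) / eqP; last by [].
    by move=> e; exfalso; move/eqP: hk; apply; apply: val_inj.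
  by rewrite mxE /= eqxx /= andbT.
- rewrite big1 ?andbF // => k _; rewrite !mxE.
  have : (k == a :> nat) = false by apply/eqP => e; move: (ltn_ord k); rewrite e; lia.
  by move=> ->.
Qed.

Lemma trEmx a b : (Emx n a b)^T = Emx n b a.
Proof. by apply/matrixP => r s; rewrite !mxE andbC. Qed.

End Basic.

Lemma eqT_nat (a b : nat) : a = b -> (a == b) = true. Proof. by move=> ->; rewrite eqxx. Qed.
Lemma eqF_nat (a b : nat) : a <> b -> (a == b) = false. Proof. by move/eqP/negbTE. Qed.
Lemma leT_nat (a b : nat) : (a <= b)%coq_nat -> (a <= b)%N = true. Proof. by move/leP. Qed.
Lemma leF_nat (a b : nat) : (b < a)%coq_nat -> (a <= b)%N = false. Proof. by move/ltP; rewrite ltnNge => /negbTE. Qed.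

Ltac dec1 := match goal with
 | |- context [@eq_op _ ?a ?b] => lazymatch type of a with nat =>
      first [ rewrite (@eqT_nat a b); [|lia] | rewrite (@eqF_nat a b); [|lia] ] end
 | |- context [leq ?a ?b] =>
      first [ rewrite (@leT_nat a b); [|lia] | rewrite (@leF_nat a b); [|lia] ]
 end.
Ltac decall := rewrite ?eqn_add2l; repeat dec1; rewrite ?andbT ?andbF ?andTb ?andFb ?orbT ?orbF ?orTb ?orFb.


Ltac csplit := match goal with |- context [@eq_op _ ?a ?b] => lazymatch type of a with nat => case: (@eqP _ a b) => ?; try subst end end.
Ltac crunch := decall; first [ csplit; crunch | idtac ].
Ltac mxring := apply/matrixP => ? ?; rewrite !mxE /=; ring.

Definition Lm n x y : Mat n := Emx n x y - Emx n (n+y) (n+x).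
Definition Qm n j k : Mat n := Emx n (n+j) k + Emx n (n+k) j.

Section Br.
Variable n : nat.
Lemma brLL x y j a : (x<n)%N->(y<n)%N->(j<n)%N->(a<n)%N ->
  bracket n (Lm n x y) (Lm n j a) = (j == y)%:R *: Lm n x a - (a == x)%:R *: Lm n j y.
Proof.
move=> hx hy hj ha.
rewrite /bracket /Lm !mulmxBl !mulmxBr !mulEE.
crunch; mxring.
Qed.

Lemma brLQ x y j k : (x<n)%N->(y<n)%N->(j<n)%N->(k<n)%N ->
  bracket n (Lm n x y) (Qm n j k) = - ((j == x)%:R *: Qm n y k + (k == x)%:R *: Qm n j y).
Proof.
move=> hx hy hj hk.
rewrite /bracket /Lm /Qm !mulmxBl !mulmxBr !mulmxDl !mulmxDr !mulEE.
crunch; mxring.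
Qed.

Lemma brEL x y j a : (x<n)%N->(y<n)%N->(j<n)%N->(a<n)%N -> j <> y -> j <> x -> a <> x -> a <> y ->
  bracket n (Emx n (n+x) y) (Lm n j a) = 0.
Proof.
move=> hx hy hj ha h1 h2 h3 h4.
rewrite /bracket /Lm !mulmxBl !mulmxBr !mulEE.
crunch; mxring.
Qed.

Lemma brEQ x y j k : (x<n)%N->(y<n)%N->(j<n)%N->(k<n)%N ->
  bracket n (Emx n (n+x) y) (Qm n j k) = 0.
Proof.
move=> hx hy hj hk.
rewrite /bracket /Qm !mulmxDl !mulmxDr !mulEE.
crunch; mxring.
Qed.
End Br.

Lemma sum_delta_gen (V : lmodType algC) m a (F : nat -> V) G : (a < m)%N ->
  (forall j, (j < m)%N -> j != a -> F j = 0) -> F a = G -> \sum_(0<=j<m) F j = G.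
Proof.
move=> ha h0 hG; rewrite big_mkord (bigD1 (Ordinal ha)) //= big1 ?addr0 //.
move=> j hj; apply: h0 => //; apply: contra hj => /eqP e; apply/eqP; exact: val_inj.
Qed.

Section H.
Variable n : nat.
Variable h : nat -> algC.
Lemma HE_l x b : (x < n)%N -> Hdiag n h *m Emx n x b = h x *: Emx n x b.
Proof.
move=> hx; rewrite /Hdiag mulmx_suml; apply: (@sum_delta_gen _ _ x) => //.
- move=> j hj hne; rewrite -scalemxAl mulmxBl !mulEE; decall; mxring.
- rewrite -scalemxAl mulmxBl !mulEE; decall; mxring.
Qed.
Lemma HE_r x b : (x < n)%N -> Hdiag n h *m Emx n (n+x) b = - h x *: Emx n (n+x) b.
Proof.
move=> hx; rewrite /Hdiag mulmx_suml; apply: (@sum_delta_gen _ _ x) => //.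
- move=> j hj hne; rewrite -scalemxAl mulmxBl !mulEE; decall; mxring.
- rewrite -scalemxAl mulmxBl !mulEE; decall; mxring.
Qed.
Lemma EH_l a x : (x < n)%N -> Emx n a x *m Hdiag n h = h x *: Emx n a x.
Proof.
move=> hx; rewrite /Hdiag mulmx_sumr; apply: (@sum_delta_gen _ _ x) => //.
- move=> j hj hne; rewrite -scalemxAr mulmxBr !mulEE; decall; mxring.
- rewrite -scalemxAr mulmxBr !mulEE; decall; mxring.
Qed.
Lemma EH_r a x : (x < n)%N -> Emx n a (n+x) *m Hdiag n h = - h x *: Emx n a (n+x).
Proof.
move=> hx; rewrite /Hdiag mulmx_sumr; apply: (@sum_delta_gen _ _ x) => //.
- move=> j hj hne; rewrite -scalemxAr mulmxBr !mulEE; decall; mxring.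
- rewrite -scalemxAr mulmxBr !mulEE; decall; mxring.
Qed.
Lemma brHL x y : (x<n)%N->(y<n)%N-> bracket n (Hdiag n h) (Lm n x y) = (h x - h y) *: Lm n x y.
Proof. move=> hx hy; rewrite /bracket /Lm mulmxBl mulmxBr HE_l ?HE_r ?EH_r ?EH_l //; mxring. Qed.
Lemma brHQ x y : (x<n)%N->(y<n)%N-> bracket n (Hdiag n h) (Qm n x y) = - (h x + h y) *: Qm n x y.
Proof. move=> hx hy; rewrite /bracket /Qm mulmxDl mulmxDr !HE_r ?EH_l //; mxring. Qed.
End H.

Section Tens.
Variable n : nat.
Implicit Types (A B C D Z : Mat n) (T S : Tens n).
Lemma tensDl A B C : tens n (A + B) C = tens n A C + tens n B C.
Proof. by apply/matrixP => r s; rewrite !mxE mulrDl. Qed.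
Lemma tensDr A B C : tens n A (B + C) = tens n A B + tens n A C.
Proof. by apply/matrixP => r s; rewrite !mxE mulrDr. Qed.
Lemma tensZl (c : algC) A B : tens n (c *: A) B = c *: tens n A B.
Proof. by apply/matrixP => r s; rewrite !mxE mulrA. Qed.
Lemma tensZr (c : algC) A B : tens n A (c *: B) = c *: tens n A B.
Proof. by apply/matrixP => r s; rewrite !mxE mulrCA. Qed.
Lemma tensNl A B : tens n (- A) B = - tens n A B.
Proof. by apply/matrixP => r s; rewrite !mxE mulNr. Qed.
Lemma tensNr A B : tens n A (- B) = - tens n A B.
Proof. by apply/matrixP => r s; rewrite !mxE mulrN. Qed.
Lemma tensBl A B C : tens n (A - B) C = tens n A C - tens n B C.
Proof. by rewrite tensDl tensNl. Qed.
Lemma tensBr A B C : tens n A (B - C) = tens n A B - tens n A C.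
Proof. by rewrite tensDr tensNr. Qed.
Lemma tens0l B : tens n 0 B = 0.
Proof. by apply/matrixP => r s; rewrite !mxE mul0r. Qed.
Lemma tens0r A : tens n A 0 = 0.
Proof. by apply/matrixP => r s; rewrite !mxE mulr0. Qed.
Lemma tens_mul A B C D : tens n A B *m tens n C D = tens n (A *m C) (B *m D).
Proof. exact: tensmx_mul. Qed.
Lemma tr_tens A B : \tr (tens n A B) = \tr A * \tr B.
Proof. by rewrite /mxtrace mulr_sum; apply: eq_bigr => k _; rewrite mxE. Qed.

Lemma tact_tens Z A B : tact n Z (tens n A B) = tens n (bracket n Z A) B + tens n A (bracket n Z B).
Proof.
rewrite /tact /bracket mulmxDl mulmxDr !tens_mul !mul1mx !mulmx1 tensBl tensBr.
by rewrite opprD !addrA; congr (_ + _); rewrite -!addrA; congr (_ + _); rewrite addrC.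
Qed.
Lemma tactD Z T S : tact n Z (T + S) = tact n Z T + tact n Z S.
Proof. rewrite /tact /=; set D := (tens n Z 1%:M + tens n 1%:M Z). by rewrite (mulmxDr D T S) (mulmxDl T S D) opprD addrACA. Qed.
Lemma tactZ Z (c : algC) T : tact n Z (c *: T) = c *: tact n Z T.
Proof. by rewrite /tact scalerBr scalemxAr scalemxAl. Qed.
Lemma tactN Z T : tact n Z (- T) = - tact n Z T.
Proof. by rewrite /tact mulmxN mulNmx opprB opprK addrC. Qed.
Lemma tact0 Z : tact n Z 0 = 0.
Proof. by rewrite /tact mulmx0 mul0mx subrr. Qed.
Lemma tactB Z T S : tact n Z (T - S) = tact n Z T - tact n Z S.
Proof. by rewrite tactD tactN. Qed.
Lemma tact_sum Z I (r : seq I) (P : pred I) (F : I -> Tens n) :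
  tact n Z (\sum_(i <- r | P i) F i) = \sum_(i <- r | P i) tact n Z (F i).
Proof. exact: (big_morph _ (tactD Z) (tact0 Z)). Qed.
Lemma tactDl Z1 Z2 T : tact n (Z1 + Z2) T = tact n Z1 T + tact n Z2 T.
Proof.
rewrite /tact tensDl tensDr.
set a := tens n Z1 1%:M; set b := tens n Z2 1%:M; set c := tens n 1%:M Z1; set d := tens n 1%:M Z2.
have -> : a + b + (c + d) = (a + c) + (b + d) by rewrite addrACA.
by rewrite mulmxDl mulmxDr opprD !addrA; congr (_ + _); rewrite -!addrA; congr (_ + _); rewrite addrC.
Qed.
Lemma tact0l T : tact n 0 T = 0.
Proof. by rewrite /tact tens0l tens0r addr0 mul0mx mulmx0 subrr. Qed.
Lemma tactZl (c : algC) Z T : tact n (c *: Z) T = c *: tact n Z T.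
Proof. by rewrite /tact tensZl tensZr -scalerDr -scalemxAl -scalemxAr scalerBr. Qed.
Lemma tact_suml I (r : seq I) (P : pred I) (F : I -> Mat n) T :
  tact n (\sum_(i <- r | P i) F i) T = \sum_(i <- r | P i) tact n (F i) T.
Proof. exact: (big_morph (fun Z => tact n Z T) (fun a b => tactDl a b T) (tact0l T)). Qed.
End Tens.

Ltac expand := rewrite ?(mulmxDl, mulmxDr, mulmxBl, mulmxBr, mulmxN, mulNmx).

Section J.
Variable n : nat.
Lemma EJ_l a x : (x < n)%N -> Emx n a x *m Jmx n = Emx n a (n+x).
Proof.
move=> hx; rewrite /Jmx mulmx_sumr; apply: (@sum_delta_gen _ _ x) => //.
- move=> j hj hne; rewrite mulmxBr !mulEE; decall; mxring.
- rewrite mulmxBr !mulEE; decall; mxring.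
Qed.
Lemma EJ_r a x : (x < n)%N -> Emx n a (n+x) *m Jmx n = - Emx n a x.
Proof.
move=> hx; rewrite /Jmx mulmx_sumr; apply: (@sum_delta_gen _ _ x) => //.
- move=> j hj hne; rewrite mulmxBr !mulEE; decall; mxring.
- rewrite mulmxBr !mulEE; decall; mxring.
Qed.
Lemma JE_l x b : (x < n)%N -> Jmx n *m Emx n x b = - Emx n (n+x) b.
Proof.
move=> hx; rewrite /Jmx mulmx_suml; apply: (@sum_delta_gen _ _ x) => //.
- move=> j hj hne; rewrite mulmxBl !mulEE; decall; mxring.
- rewrite mulmxBl !mulEE; decall; mxring.
Qed.
Lemma JE_r x b : (x < n)%N -> Jmx n *m Emx n (n+x) b = Emx n x b.
Proof.
move=> hx; rewrite /Jmx mulmx_suml; apply: (@sum_delta_gen _ _ x) => //.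
- move=> j hj hne; rewrite mulmxBl !mulEE; decall; mxring.
- rewrite mulmxBl !mulEE; decall; mxring.
Qed.

Lemma sp_L x y : (x < n)%N -> (y < n)%N -> is_sp n (Lm n x y).
Proof.
move=> hx hy; rewrite /is_sp /Lm raddfB /= !trEmx; expand.
rewrite EJ_l // EJ_r // JE_l // JE_r //; apply/eqP; mxring.
Qed.
Lemma sp_Q x y : (x < n)%N -> (y < n)%N -> is_sp n (Qm n x y).
Proof.
move=> hx hy; rewrite /is_sp /Qm raddfD /= !trEmx; expand.
rewrite !EJ_r // !JE_r //; apply/eqP; mxring.
Qed.
End J.

Lemma tr_delta m (a b : 'I_m) (M : 'M[algC]_m) : \tr (delta_mx b a *m M) = M a b.
Proof.
rewrite /mxtrace (bigD1 b) //= big1 ?addr0.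
- rewrite mxE (bigD1 a) //= big1 ?addr0; first by rewrite mxE !eqxx mul1r.
  by move=> k hk; rewrite mxE eqxx (negbTE hk) mul0r.
- move=> k hk; rewrite mxE big1 // => l _; rewrite mxE (negbTE hk) mul0r //.
Qed.

Section Z.
Variable n : nat.
Lemma delta_Emx (a b : 'I_(n+n)) : delta_mx a b = Emx n a b.
Proof. by apply/matrixP => r s; rewrite !mxE. Qed.

Lemma sp_entry (Z : Mat n) (x y : 'I_n) : is_sp n Z ->
  Z (rshift n x) (rshift n y) = - Z (lshift n y) (lshift n x).
Proof.
move=> hsp.
have : \tr (delta_mx (rshift n y) (lshift n x) *m (Z^T *m Jmx n + Jmx n *m Z)) = 0.
  by move/eqP: hsp => ->; rewrite mulmx0 mxtrace0.
rewrite delta_Emx mulmxDr mxtraceD.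
change (Emx n (rshift n y) (lshift n x)) with (Emx n (n + y) x).
rewrite mulmxA mxtrace_mulC !mulmxA JE_r // EJ_l //.
have -> : Emx n y x = delta_mx (lshift n y) (lshift n x) by rewrite delta_Emx.
have -> : Emx n (n+y) (n+x) = delta_mx (rshift n y) (rshift n x) by rewrite delta_Emx.
rewrite !tr_delta mxE; move/eqP; rewrite addr_eq0 => /eqP ->; by rewrite opprK.
Qed.

Variable i : nat.
Definition ind (j : nat) : algC := if (j < i)%N then 1 else 0.

Lemma lev_bracket (Z : Mat n) : lev n i Z -> bracket n (H0 n i) Z = 0.
Proof. by case/andP => _ /eqP ->; rewrite scale0r. Qed.

Lemma lev_ll (Z : Mat n) (x y : 'I_n) : lev n i Z ->
  Z (lshift n x) (lshift n y) != 0 -> (x < i)%N = (y < i)%N.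
Proof.
move=> hl hz.
have : \tr (delta_mx (lshift n y) (lshift n x) *m bracket n (H0 n i) Z) = 0
  by rewrite lev_bracket // mulmx0 mxtrace0.
rewrite delta_Emx /bracket mulmxBr raddfB /=.
change (Emx n (lshift n y) (lshift n x)) with (Emx n y x).
rewrite [E in \tr E - _]mulmxA [E in _ - \tr E]mulmxA [X in _ - X]mxtrace_mulC [E in _ - \tr E]mulmxA /H0 EH_l // HE_l //.
rewrite -!scalemxAl !mxtraceZ.
have -> : Emx n y x = delta_mx (lshift n y) (lshift n x) by rewrite delta_Emx.
rewrite !tr_delta.
case: (ltnP x i) => hx; case: (ltnP y i) => hy //=; move/eqP; rewrite ?subrr ?subr0 ?sub0r.
- by rewrite mul1r mul0r subr0 (negbTE hz).
- by rewrite mul1r mul0r sub0r oppr_eq0 (negbTE hz).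
Qed.

Lemma lev_rl (Z : Mat n) (x y : 'I_n) : lev n i Z ->
  Z (rshift n x) (lshift n y) != 0 -> (i <= x)%N && (i <= y)%N.
Proof.
move=> hl hz.
have : \tr (delta_mx (lshift n y) (rshift n x) *m bracket n (H0 n i) Z) = 0
  by rewrite lev_bracket // mulmx0 mxtrace0.
rewrite delta_Emx /bracket mulmxBr raddfB /=.
change (Emx n (lshift n y) (rshift n x)) with (Emx n y (n + x)).
rewrite [E in \tr E - _]mulmxA [E in _ - \tr E]mulmxA [X in _ - X]mxtrace_mulC [E in _ - \tr E]mulmxA /H0 EH_r // HE_l //.
rewrite -!scalemxAl !mxtraceZ.
have -> : Emx n y (n+x) = delta_mx (lshift n y) (rshift n x) by rewrite delta_Emx.
rewrite !tr_delta.
case: (ltnP x i) => hx; case: (ltnP y i) => hy //=; move/eqP; rewrite -mulrBl mulf_eq0 (negbTE hz) orbF.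
- by rewrite -opprD oppr_eq0 (_ : 1 + 1 = 2%:R :> algC) ?pnatr_eq0.
- by rewrite subr0 oppr_eq0 oner_eq0.
- by rewrite oppr0 sub0r oppr_eq0 oner_eq0.
Qed.
End Z.

Lemma sum_delta_nat (V : lmodType algC) m a (F : nat -> V) : (a < m)%N ->
  \sum_(0 <= j < m) (j == a)%:R *: F j = F a.
Proof.
move=> ha; apply: (@sum_delta_gen _ _ a) => //.
- by move=> j _ hne; rewrite (negbTE hne) scale0r.
- by rewrite eqxx scale1r.
Qed.

Definition Tm n i : Tens n :=
  \sum_(0 <= j < i) (tens n (Lm n j 0) (Qm n j 1) - tens n (Lm n j 1) (Qm n j 0)).

Section Kill.
Variable n : nat.

Lemma Zdecomp (Z : Mat n) : is_sp n Z -> (forall x y : 'I_n, Z (lshift n x) (rshift n y) = 0) ->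
  Z = \sum_(x < n) \sum_(y < n) (Z (lshift n x) (lshift n y) *: Lm n x y
                               + Z (rshift n x) (lshift n y) *: Emx n (n + x) y).
Proof.
move=> hsp hB.
have step1 : Z = \sum_(x < n) \sum_(y < n) (Z (lshift n x) (lshift n y) *: Emx n x y
                   + Z (lshift n x) (rshift n y) *: Emx n x (n + y))
   + \sum_(x < n) \sum_(y < n) (Z (rshift n x) (lshift n y) *: Emx n (n + x) y
                   + Z (rshift n x) (rshift n y) *: Emx n (n + x) (n + y)).
  rewrite {1}[Z]matrix_sum_delta sumr_add; congr (_ + _); apply: eq_bigr => x _;
  rewrite sumr_add -big_split /=; apply: eq_bigr => y _; rewrite !delta_Emx //.
have e2 : \sum_(x < n) \sum_(y < n) Z (lshift n x) (lshift n y) *: Emx n (n+y) (n+x)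
   = - \sum_(x < n) \sum_(y < n) Z (rshift n x) (rshift n y) *: Emx n (n+x) (n+y).
  rewrite exchange_big /= -sumrN; apply: eq_bigr => y _; rewrite -sumrN; apply: eq_bigr => x _.
  by rewrite sp_entry // scaleNr opprK.
have e3 : \sum_(x < n) \sum_(y < n) (Z (lshift n x) (lshift n y) *: Lm n x y
                               + Z (rshift n x) (lshift n y) *: Emx n (n + x) y)
  = \sum_(x < n) \sum_(y < n) Z (lshift n x) (lshift n y) *: Emx n x y
   - \sum_(x < n) \sum_(y < n) Z (lshift n x) (lshift n y) *: Emx n (n+y) (n+x)
   + \sum_(x < n) \sum_(y < n) Z (rshift n x) (lshift n y) *: Emx n (n + x) y.
  rewrite -sumrB -big_split /=; apply: eq_bigr => x _.
  rewrite -sumrB -big_split /=; apply: eq_bigr => y _.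
  by rewrite /Lm scalerBr.
rewrite e3 e2 opprK {1}step1.
under eq_bigr => x _ do under eq_bigr => y _ do rewrite hB scale0r addr0.
rewrite [X in _ + X = _](_ : _ = \sum_(x < n) \sum_(y < n) Z (rshift n x) (lshift n y) *: Emx n (n + x) y
   + \sum_(x < n) \sum_(y < n) Z (rshift n x) (rshift n y) *: Emx n (n+x) (n+y)).
  by rewrite addrA addrAC.
rewrite -big_split /=; apply: eq_bigr => x _; exact: big_split.
Qed.
End Kill.

Section Kill2.
Variable n : nat.

Lemma tactL_pt x y j : (y < x)%N -> (x < n)%N -> (j < n)%N ->
  tact n (Lm n x y) (tens n (Lm n j 0) (Qm n j 1) - tens n (Lm n j 1) (Qm n j 0)) =
  (j == y)%:R *: (tens n (Lm n x 0) (Qm n j 1) - tens n (Lm n x 1) (Qm n j 0))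
  - (j == x)%:R *: (tens n (Lm n j 0) (Qm n y 1) - tens n (Lm n j 1) (Qm n y 0)).
Proof.
move=> hxy hx hj.
rewrite tactB !tact_tens !brLL ?brLQ //; try lia.
rewrite (@eqF_nat 0 x); last lia.
case: (eqVneq x 1) => [e|ne].
- subst x; have -> : y = 0%N by lia.
  rewrite /tens. Time mxring.
- rewrite /tens. crunch. all: mxring.
Qed.

End Kill2.

Section Kill2.
Variable n : nat.
Lemma tactL_far x y j a b : (x < n)%N -> (y < n)%N -> (j < n)%N -> (a < n)%N -> (b < n)%N ->
  (j < x)%N -> (j < y)%N -> (a < x)%N -> (a < y)%N -> (b < x)%N -> (b < y)%N ->
  tact n (Lm n x y) (tens n (Lm n j a) (Qm n j b)) = 0.
Proof.
move=> *; rewrite tact_tens brLL ?brLQ //; decall; rewrite /= ?mulr0n ?scale0r ?subrr ?addr0 ?oppr0 ?tens0l ?tens0r ?addr0 //.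
Qed.

Lemma tactE_far x y j a b : (x < n)%N -> (y < n)%N -> (j < n)%N -> (a < n)%N -> (b < n)%N ->
  (j < x)%N -> (j < y)%N -> (a < x)%N -> (a < y)%N ->
  tact n (Emx n (n + x) y) (tens n (Lm n j a) (Qm n j b)) = 0.
Proof.
move=> *; rewrite tact_tens brEL ?brEQ ?tens0l ?tens0r ?addr0 //; lia.
Qed.

End Kill2.

Section Kill3.
Variable n : nat.
Variable i : nat.
Hypothesis hi : (2 <= i)%N.
Hypothesis hin : (i < n)%N.

Lemma tactL_near x y : (y < x)%N -> (x < i)%N -> tact n (Lm n x y) (Tm n i) = 0.
Proof.
move=> hxy hx.
have e : forall j, (0 <= j < i)%N -> tact n (Lm n x y)
   (tens n (Lm n j 0) (Qm n j 1) - tens n (Lm n j 1) (Qm n j 0)) =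
  (j == y)%:R *: (tens n (Lm n x 0) (Qm n j 1) - tens n (Lm n x 1) (Qm n j 0))
  - (j == x)%:R *: (tens n (Lm n j 0) (Qm n y 1) - tens n (Lm n j 1) (Qm n y 0)).
  by move=> j hj; apply: tactL_pt; lia.
rewrite /Tm tact_sum (eq_big_nat _ _ e) sumrB !sum_delta_nat ?subrr //; lia.
Qed.

Lemma tactL_farT x y : (i <= x)%N -> (i <= y)%N -> (x < n)%N -> (y < n)%N -> tact n (Lm n x y) (Tm n i) = 0.
Proof.
move=> h1 h2 h3 h4.
rewrite /Tm tact_sum big_nat_cond big1 // => j /andP [/andP [_ hj] _].
rewrite tactB !tactL_far ?subrr //; lia.
Qed.

Lemma tactE_farT x y : (i <= x)%N -> (i <= y)%N -> (x < n)%N -> (y < n)%N -> tact n (Emx n (n+x) y) (Tm n i) = 0.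
Proof.
move=> h1 h2 h3 h4.
rewrite /Tm tact_sum big_nat_cond big1 // => j /andP [/andP [_ hj] _].
rewrite tactB !tactE_far ?subrr //; lia.
Qed.

Lemma kill (Z : Mat n) : lev n i Z -> neg_part n Z -> tact n Z (Tm n i) = 0.
Proof.
move=> hl hn.
have hsp : is_sp n Z by case/andP: hl.
have hneg : forall a b : 'I_(n+n), ((a < n) && (b < n) && (a <= b) || (a < n) && (n <= b))%N -> Z a b = 0.
  move=> a b hab; case/andP: hn => _ /forallP /(_ a) /forallP /(_ b) /implyP /(_ hab) /eqP //.
have hB : forall x y : 'I_n, Z (lshift n x) (rshift n y) = 0.
  move=> x y; apply: hneg => /=; rewrite ltn_ord leq_addr /=; lia.
rewrite (@Zdecomp n Z hsp hB) tact_suml big1 // => x _; rewrite tact_suml big1 // => y _.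
rewrite tactDl !tactZl.
have -> : Z (lshift n x) (lshift n y) *: tact n (Lm n x y) (Tm n i) = 0.
  have [->|hz] := eqVneq (Z (lshift n x) (lshift n y)) 0; first by rewrite scale0r.
  have hyx : (y < x)%N.
    rewrite ltnNge; apply/negP => hle; move/eqP: hz; apply; apply: hneg; by rewrite /= !ltn_ord hle.
  have hlev := @lev_ll n i Z x y hl hz.
  case: (ltnP x i) => hx.
  - by rewrite tactL_near ?scaler0.
  - have hy : (i <= y)%N by rewrite leqNgt -hlev -leqNgt.
    by rewrite tactL_farT ?scaler0 // ltn_ord.
have [->|hz] := eqVneq (Z (rshift n x) (lshift n y)) 0; first by rewrite scale0r addr0.
case/andP: (@lev_rl n i Z x y hl hz) => h1 h2.
by rewrite tactE_farT ?scaler0 ?addr0 ?ltn_ord.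
Qed.
End Kill3.

Definition Qp n x y : Mat n := Emx n x (n+y) + Emx n y (n+x).

Section D.
Variable n : nat.
Lemma is_spD (A B : Mat n) : is_sp n A -> is_sp n B -> is_sp n (A + B).
Proof. rewrite /is_sp => /eqP hA /eqP hB; by rewrite raddfD /= mulmxDl mulmxDr addrACA hA hB addr0. Qed.
Lemma is_spN (A : Mat n) : is_sp n A -> is_sp n (- A).
Proof. rewrite /is_sp => /eqP hA; by rewrite raddfN /= mulNmx mulmxN -opprD hA oppr0. Qed.
Lemma is_spB (A B : Mat n) : is_sp n A -> is_sp n B -> is_sp n (A - B).
Proof. by move=> hA hB; rewrite is_spD ?is_spN. Qed.
Lemma sp_Qp x y : (x < n)%N -> (y < n)%N -> is_sp n (Qp n x y).
Proof.
move=> hx hy; rewrite /is_sp /Qp raddfD /= !trEmx; expand.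
rewrite !EJ_l // !JE_l //; apply/eqP; mxring.
Qed.
Lemma brHQp h x y : (x<n)%N->(y<n)%N-> bracket n (Hdiag n h) (Qp n x y) = (h x + h y) *: Qp n x y.
Proof. move=> hx hy; rewrite /bracket /Qp mulmxDl mulmxDr !HE_l ?EH_r //; mxring. Qed.

Lemma weight i h : (2 <= i)%N -> (i <= n)%N ->
  tact n (Hdiag n h) (Tm n i) = - (h 0%N + h 1%N) *: Tm n i.
Proof.
move=> hi hin.
rewrite /Tm tact_sum scaler_sumr; apply: eq_big_nat => j hj.
rewrite tactB !tact_tens !brHL ?brHQ; try lia.
rewrite !tensZl !tensZr scalerBr -!scalerDl.
by congr (_ *: _ - _ *: _); ring.
Qed.
End D.

Definition Xq n q : Mat n := Emx n 0 (n+q) + Emx n q n + Emx n 1 q - Emx n (n+q) (n+1).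
Lemma bracketD n (H A B : Mat n) : bracket n H (A + B) = bracket n H A + bracket n H B.
Proof. by rewrite /bracket mulmxDl mulmxDr opprD addrACA. Qed.
Lemma bracketN n (H A : Mat n) : bracket n H (- A) = - bracket n H A.
Proof. by rewrite /bracket mulmxN mulNmx opprB opprK addrC. Qed.
Lemma bracketZ n (H A : Mat n) c : bracket n H (c *: A) = c *: bracket n H A.
Proof. by rewrite /bracket scalerBr scalemxAr scalemxAl. Qed.
Section D2.
Variable n i : nat.
Hypothesis hi : (2 <= i)%N.
Hypothesis hin : (i < n)%N.

Lemma zbar_Q j k : (j < i)%N -> (k < i)%N -> zbar n i (Qm n j k).
Proof.
move=> hj hk; rewrite /zbar /gdeg sp_Q /=; try lia.
rewrite /H0 brHQ /=; try lia.
rewrite (leT_nat (j.+1) i); last lia. rewrite (leT_nat (k.+1) i); last lia.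
by apply/eqP; congr (_ *: _).
Qed.

Lemma g1_X : g1 n i (Xq n i).
Proof.
have -> : Xq n i = Qp n 0 i + Lm n 1 i by rewrite /Xq /Qp /Lm addn0; mxring.
rewrite /g1 /gdeg is_spD ?sp_Qp ?sp_L /=; try lia.
rewrite /H0 bracketD brHQp ?brHL /=; try lia.
decall; rewrite /= ?subr0 ?addr0 ?scale1r.
by [].
Qed.

Lemma sum_ind c : (c < i)%N -> \sum_(a < n + n | (a < i)%N) ((a : nat) == c)%:R = 1 :> algC.
Proof.
move=> hc; have hc' : (c < n + n)%N by lia.
rewrite (bigD1 (Ordinal hc')) /= ?hc // eqxx big1 ?addr0 // => a /andP [_ hne].
rewrite (@eqF_nat a c) // => e; move/eqP: hne; apply; apply: val_inj; exact: e.
Qed.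

Lemma supp_L x y (a b : 'I_(n+n)) : (x < i)%N -> (y < i)%N ->
  (Lm n x y a b != 0) ==> (((a < i) && (b < i)) || ((n <= a < n + i) && (n <= b < n + i)))%N.
Proof.
move=> hx hy; rewrite /Lm !mxE.
case: (a == x :> nat) / eqP => ?; case: (b == y :> nat) / eqP => ?;
case: (a == n + y :> nat) / eqP => ?; case: (b == n + x :> nat) / eqP => ? /=;
rewrite ?subrr ?eqxx //= ?implyTb; apply/implyP => _; lia.
Qed.

Lemma lgamma_L x y : (x < i)%N -> (y < i)%N -> x <> y -> lgamma n i (Lm n x y).
Proof.
move=> hx hy hxy; rewrite /lgamma sp_L /=; try lia.
apply/andP; split.
- by apply/forallP => a; apply/forallP => b; apply: supp_L.
- rewrite big1 // => a _; rewrite /Lm !mxE.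
  case: (a == x :> nat) / eqP => ?; case: (a == y :> nat) / eqP => ? /=; try lia;
  case: (a == n + y :> nat) / eqP => ?; case: (a == n + x :> nat) / eqP => ? /=; try lia;
  by rewrite ?subrr.
Qed.

Lemma lgamma_N X : lgamma n i X -> lgamma n i (- X).
Proof.
case/and3P => h1 h2 h3; apply/and3P; split.
- exact: is_spN.
- apply/forallP => a; apply/forallP => b; move/forallP: h2 => /(_ a) /forallP /(_ b).
  by rewrite mxE oppr_eq0.
- under eq_bigr => a _ do rewrite mxE.
  by rewrite sumrN (eqP h3) oppr0.
Qed.

Lemma lgamma_LL : lgamma n i (Lm n 0 0 - Lm n 1 1).
Proof.
rewrite /lgamma is_spB ?sp_L /=; try lia.
apply/andP; split.
- apply/forallP => a; apply/forallP => b.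
  have e : (Lm n 0 0 - Lm n 1 1) a b = Lm n 0 0 a b - Lm n 1 1 a b by rewrite !mxE.
  rewrite e; apply/implyP => hne.
  have : (Lm n 0 0 a b != 0) || (Lm n 1 1 a b != 0).
    apply: contraR hne => /norP [/negPn/eqP -> /negPn/eqP ->]; by rewrite subrr.
  case/orP => h.
  + by move/implyP: (supp_L 0 0 a b ltac:(lia) ltac:(lia)); apply.
  + by move/implyP: (supp_L 1 1 a b ltac:(lia) ltac:(lia)); apply.
- have e : forall a : 'I_(n+n), (a < i)%N -> (Lm n 0 0 - Lm n 1 1) a a = ((a:nat) == 0%N)%:R - ((a:nat) == 1%N)%:R.
    move=> a ha; rewrite /Lm !mxE; decall; rewrite !andbb; ring.
  rewrite (eq_bigr _ e) sumrB !sum_ind ?subrr //; lia.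
Qed.
End D2.

Lemma trEE n a b c d : \tr (Emx n a b *m Emx n c d) = ((b == c) && (a == d) && (a < n + n)%N && (b < n + n)%N)%:R.
Proof. rewrite mulEE mxtraceZ trE; case: (b == c); case: (a == d); case: (b < n + n)%N; case: (a < n+n)%N; rewrite /= ?mulr1 ?mulr0 ?mul0r //. Qed.
Ltac trcomp := rewrite /bracket /Xq /Lm /Qm ?addn0; expand; rewrite ?mulEE; decall; mxring.
Ltac trfin := rewrite /Lm ?addn0; expand; rewrite ?mxtraceD ?raddfB ?raddfN /= ?trEE; decall; rewrite /=; ring.

Section E.
Variable n i : nat.
Hypothesis hi : (2 <= i)%N.
Hypothesis hin : (i < n)%N.
Local Notation X := (Xq n i).

Lemma v_gen j : (2 <= j)%N -> (j < i)%N ->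
  \tr (Lm n j 0 *m bracket n X (bracket n X (Qm n j 1))) - \tr (Lm n j 1 *m bracket n X (bracket n X (Qm n j 0))) = - 4%:R.
Proof.
move=> h1 h2.
have e1 : bracket n X (Qm n j 1) = - Emx n (n+j) i - Emx n (n+i) j by trcomp.
have e2 : bracket n X (- Emx n (n+j) i - Emx n (n+i) j) = - Emx n 0 j + Emx n (n+j) n by trcomp.
have e3 : bracket n X (Qm n j 0) = Emx n i j - Emx n (n+j) (n+i) by trcomp.
have e4 : bracket n X (Emx n i j - Emx n (n+j) (n+i)) = Emx n 1 j - Emx n (n+j) (n+1) by trcomp.
rewrite e1 e2 e3 e4; trfin.
Qed.

Lemma v_0 :
  \tr (Lm n 0 0 *m bracket n X (bracket n X (Qm n 0 1))) - \tr (Lm n 0 1 *m bracket n X (bracket n X (Qm n 0 0))) = - 6%:R.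
Proof.
have e1 : bracket n X (Qm n 0 1) = Emx n i 1 - Emx n n i - Emx n (n+1) (n+i) - Emx n (n+i) 0 by trcomp.
have e2 : bracket n X (Emx n i 1 - Emx n n i - Emx n (n+1) (n+i) - Emx n (n+i) 0) =
   - Emx n 0 0 + Emx n 1 1 - Emx n i i - Emx n i i + Emx n n n - Emx n (n+1) (n+1) + Emx n (n+i) (n+i) + Emx n (n+i) (n+i) by trcomp.
have e3 : bracket n X (Qm n 0 0) = Emx n i 0 + Emx n i 0 - Emx n n (n+i) - Emx n n (n+i) by trcomp.
have e4 : bracket n X (Emx n i 0 + Emx n i 0 - Emx n n (n+i) - Emx n n (n+i)) =
   Emx n 1 0 + Emx n 1 0 - Emx n i (n+i) - Emx n i (n+i) - Emx n i (n+i) - Emx n i (n+i) - Emx n n (n+1) - Emx n n (n+1) by trcomp.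
rewrite e1 e2 e3 e4; trfin.
Qed.

Lemma v_1 :
  \tr (Lm n 1 0 *m bracket n X (bracket n X (Qm n 1 1))) - \tr (Lm n 1 1 *m bracket n X (bracket n X (Qm n 0 1))) = - 6%:R.
Proof.
have e1 : bracket n X (Qm n 0 1) = Emx n i 1 - Emx n n i - Emx n (n+1) (n+i) - Emx n (n+i) 0 by trcomp.
have e2 : bracket n X (Emx n i 1 - Emx n n i - Emx n (n+1) (n+i) - Emx n (n+i) 0) =
   - Emx n 0 0 + Emx n 1 1 - Emx n i i - Emx n i i + Emx n n n - Emx n (n+1) (n+1) + Emx n (n+i) (n+i) + Emx n (n+i) (n+i) by trcomp.
have e3 : bracket n X (Qm n 1 1) = - Emx n (n+1) i - Emx n (n+1) i - Emx n (n+i) 1 - Emx n (n+i) 1 by trcomp.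
have e4 : bracket n X (- Emx n (n+1) i - Emx n (n+1) i - Emx n (n+i) 1 - Emx n (n+i) 1) =
   - Emx n 0 1 - Emx n 0 1 + Emx n (n+1) n + Emx n (n+1) n + Emx n (n+i) i + Emx n (n+i) i + Emx n (n+i) i + Emx n (n+i) i by trcomp.
rewrite e1 e2 e3 e4; trfin.
Qed.
End E.

Lemma sum_delta_genS m a (F : nat -> algC) G : (a < m)%N ->
  (forall j, (j < m)%N -> j != a -> F j = 0) -> F a = G -> \sum_(0<=j<m) F j = G.
Proof.
move=> ha h0 hG; rewrite big_mkord (bigD1 (Ordinal ha)) //= big1 ?addr0 //.
move=> j hj; apply: h0 => //; apply: contra hj => /eqP e; apply/eqP; exact: val_inj.
Qed.

Lemma Qm_sym n a b : Qm n a b = Qm n b a.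
Proof. by rewrite /Qm addrC. Qed.

Lemma trQXp n a b j k : (a <= b)%N -> (b < n)%N -> (j <= k)%N -> (k < n)%N ->
  \tr (Qm n a b *m Xp n j k) = ((a == j) && (b == k))%:R * 2%:R.
Proof.
move=> h1 h2 h3 h4; rewrite /Xp; case: (eqVneq j k) => [e|ne].
- subst k; rewrite /Qm; expand; rewrite ?mxtraceD ?trEE; crunch; rewrite /=; ring.
- rewrite /Qm; expand; rewrite ?mxtraceD ?trEE; crunch; rewrite /=; ring.
Qed.

Lemma Xstar_eq n a b : (a <= b)%N -> (b < n)%N ->
  Xstar n a b = ((2 * (2 * n + 2))%:R)^-1 *: Qm n a b.
Proof.
move=> h1 h2.
have hc : (2 * n + 2)%:R != 0 :> algC by rewrite pnatr_eq0 addn2.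
have h2n : 2%:R != 0 :> algC by rewrite pnatr_eq0.
have hc' : (2 * n%:R + 2 : algC) != 0 by move: hc; rewrite natrD natrM.
rewrite /Xstar /killing /Xm /Xp natrM; case: (eqVneq a b) => [e|ne].
- subst b; rewrite trEE; decall; rewrite /Qm /=.
  apply/matrixP => r s; rewrite !mxE; field; rewrite ?mulf_neq0 //.
- rewrite /Qm; expand; rewrite ?mxtraceD ?trEE; decall; rewrite /=.
  apply/matrixP => r s; rewrite !mxE; field; rewrite ?mulf_neq0 //.
Qed.

Section G.
Variable n i : nat.
Hypothesis hi : (2 <= i)%N.
Hypothesis hin : (i < n)%N.
Local Notation X := (Xq n i).
Local Notation sc := (((2 * (2 * n + 2))%:R : algC)^-1).

Lemma tr_tau (A : Mat n) a b : (a <= b)%N -> (b < i)%N ->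
  \tr (tens n A (Qm n a b) *m tau2 n i X) = \tr (A *m bracket n X (bracket n X (Xstar n a b))).
Proof.
move=> hab hb.
rewrite /tau2 -scalemxAr mxtraceZ mulmx_sumr raddf_sum /=.
have inner : forall k, (0 <= k < i)%N ->
   \tr (tens n A (Qm n a b) *m \sum_(0 <= j < k.+1) tens n (bracket n X (bracket n X (Xstar n j k))) (Xp n j k))
   = \sum_(0 <= j < k.+1) \tr (A *m bracket n X (bracket n X (Xstar n j k))) * (((a == j) && (b == k))%:R * 2%:R).
  move=> k hk; rewrite mulmx_sumr raddf_sum /=; apply: eq_big_nat => j hj.
  rewrite /= tens_mul tr_tens trQXp //; lia.
rewrite (eq_big_nat _ _ inner).
rewrite (@sum_delta_genS _ b _ (\tr (A *m bracket n X (bracket n X (Xstar n a b))) * 2%:R)) //.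
- by rewrite mulrCA mulVf ?mulr1 // pnatr_eq0.
- move=> k hk hne; rewrite big1 // => j _.
  by rewrite (@eqF_nat b k) ?andbF ?mul0r ?mulr0 //; move=> e; rewrite e eqxx in hne.
- apply: (@sum_delta_genS _ a); first lia.
  + move=> j hj hne; by rewrite (@eqF_nat a j) ?mul0r ?mulr0 //; move=> e; rewrite e eqxx in hne.
  + by rewrite !eqxx mul1r.
Qed.

Lemma tr_tau_Q (A : Mat n) j k : (j < i)%N -> (k < i)%N ->
  \tr (tens n A (Qm n j k) *m tau2 n i X) = sc * \tr (A *m bracket n X (bracket n X (Qm n j k))).
Proof.
move=> hj hk.
wlog hjk : j k hj hk / (j <= k)%N.
  move=> W; case: (leqP j k) => h; first exact: W.
  by rewrite Qm_sym W // ?Qm_sym //; lia.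
rewrite tr_tau // Xstar_eq; try lia.
by rewrite !bracketZ -scalemxAr mxtraceZ.
Qed.

Lemma tpair_val : tpair n (Tm n i) (tau2 n i X) = ((2 * n + 2)%:R ^+ 2) * (sc * (- (4 * i + 4)%:R)).
Proof.
rewrite /tpair /Tm mulmx_suml raddf_sum /=; congr (_ * _).
have hs : forall j, (0 <= j < i)%N ->
  \tr ((tens n (Lm n j 0) (Qm n j 1) - tens n (Lm n j 1) (Qm n j 0)) *m tau2 n i X) =
  sc * (\tr (Lm n j 0 *m bracket n X (bracket n X (Qm n j 1))) - \tr (Lm n j 1 *m bracket n X (bracket n X (Qm n j 0)))).
  move=> j hj; rewrite mulmxBl raddfB /= !tr_tau_Q ?mulrBr //; lia.
rewrite (eq_big_nat _ _ hs) -mulr_sumr; congr (_ * _).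
rewrite big_ltn; last lia.
rewrite big_ltn; last lia.
rewrite v_0 // [Qm n 1 0]Qm_sym v_1 //.
have hg : forall j, (2 <= j < i)%N ->
  \tr (Lm n j 0 *m bracket n X (bracket n X (Qm n j 1))) - \tr (Lm n j 1 *m bracket n X (bracket n X (Qm n j 0))) = - 4%:R.
  move=> j hj; apply: v_gen; lia.
rewrite (eq_big_nat _ _ hg) sumr_const_nat.
have [k ek] : exists k, i = k.+2 by exists (i - 2)%N; lia.
rewrite ek subSS subn1 /= -mulr_natr.
ring.
Qed.

Lemma Tm_lg : in_lg_zbar n i (Tm n i).
Proof.
exists ((Lm n 0 0 - Lm n 1 1, Qm n 0 1) :: (- Lm n 0 1, Qm n 0 0) :: (Lm n 1 0, Qm n 1 1) ::
  flatten [seq [:: (Lm n j 0, Qm n j 1); (- Lm n j 1, Qm n j 0)] | j <- iota 2 (i - 2)]).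
split.
- rewrite /= lgamma_LL // zbar_Q ?lgamma_N ?lgamma_L ?zbar_Q ?zbar_Q //=; try lia.
  apply/allP => p /flattenP [sj /mapP [j hj ->]]; rewrite mem_iota in hj.
  rewrite !inE => /orP [/eqP ->|/eqP ->] /=.
  + rewrite lgamma_L ?zbar_Q //; lia.
  + rewrite lgamma_N ?lgamma_L ?zbar_Q //; lia.
- rewrite /Tm big_ltn; last lia.
  rewrite big_ltn; last lia.
  rewrite !big_cons big_flatten big_map /=.
  have -> : \sum_(2 <= j < i) (tens n (Lm n j 0) (Qm n j 1) - tens n (Lm n j 1) (Qm n j 0))
     = \sum_(j <- iota 2 (i - 2)) \sum_(p <- [:: (Lm n j 0, Qm n j 1); (- Lm n j 1, Qm n j 0)]) tens n p.1 p.2.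
    by apply: eq_bigr => j _; rewrite !big_cons big_nil /= tensNl addr0.
  rewrite [Qm n 1 0]Qm_sym tensBl !tensNl.
  set a := tens n (Lm n 0 0) _; set b := tens n (Lm n 0 1) _; set c := tens n (Lm n 1 0) _;
  set d := tens n (Lm n 1 1) _; set r := \sum_(j <- _) _.
  rewrite -!addrA; congr (_ + _); rewrite [RHS]addrCA; congr (_ + _); by rewrite addrCA.
Qed.
End G.

Theorem proposition5p6 (n i : nat) :
  (3 <= n)%N -> (2 <= i <= n - 1)%N ->
  exists Y : Tens n, Wdual n i Y /\
    exists X : Mat n, g1 n i X /\ tpair n Y (tau2 n i X) != 0.
Proof.
move=> hn /andP [hi hin']; have hin : (i < n)%N by lia.
exists (Tm n i); split.
- move=> U hlow _; apply: hlow; split.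
  + exact: Tm_lg.
  + move=> h; apply: weight => //; lia.
  + move=> Z hl hneg; exact: kill.
- exists (Xq n i); split; first exact: g1_X.
  rewrite tpair_val //.
  rewrite mulf_neq0 ?expf_neq0 ?pnatr_eq0 ?addn2 // mulf_neq0 ?invr_eq0 ?pnatr_eq0 ?muln_eq0 ?addn2 //.
  by rewrite oppr_eq0 pnatr_eq0 addn4.
Qed.
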